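(* Let $S = R\cup B$ be a finite set of points in the plane in general position (no three collinear), colored red ($R$) and blue ($B$). If there are $a,b\in R$ and $c,d\in B$ such that the segments $\overline{ab}$ and $\overline{cd}$ intersect, then $S$ contains a balanced convex $4$-hole.
   Context: A $4$-hole of $S$ is a simple quadrilateral with vertices in $S$ and no point of $S$ in its interior; it is convex if the quadrilateral is convex, and balanced if it has exactly two red and two blue vertices. *)

(* Defs.v *)
From mathcomp Require Import all_boot all_order all_algebra.
Set Implicit Arguments. Unset Strict Implicit. Unset Printing Implicit Defensive.
Import Order.TTheory GRing.Theory Num.Theory.
Local Open Scope ring_scope.

Section Geom.
Variable R : realFieldType.
Notation pt := (R * R)%type.

(* twice the signed area of triangle pqr; > 0 iff p,q,r is a left turn *)
Definition orient (p q r : pt) : R :=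
  (q.1 - p.1) * (r.2 - p.2) - (q.2 - p.2) * (r.1 - p.1).

Definition general_position (S : seq pt) : Prop :=
  forall p q r, p \in S -> q \in S -> r \in S ->
    p <> q -> q <> r -> p <> r -> orient p q r != 0.

Definition on_segment (x a b : pt) : Prop :=
  exists t : R, 0 <= t <= 1 /\
    x = ((1 - t) * a.1 + t * b.1, (1 - t) * a.2 + t * b.2).

Definition segments_intersect (a b c d : pt) : Prop :=
  exists x, on_segment x a b /\ on_segment x c d.

Definition convex_quad (p1 p2 p3 p4 : pt) : Prop :=
  (0 < orient p1 p2 p3 /\ 0 < orient p2 p3 p4 /\
   0 < orient p3 p4 p1 /\ 0 < orient p4 p1 p2) \/
  (orient p1 p2 p3 < 0 /\ orient p2 p3 p4 < 0 /\
   orient p3 p4 p1 < 0 /\ orient p4 p1 p2 < 0).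

Definition in_quad_interior (p1 p2 p3 p4 x : pt) : Prop :=
  (0 < orient p1 p2 x /\ 0 < orient p2 p3 x /\
   0 < orient p3 p4 x /\ 0 < orient p4 p1 x) \/
  (orient p1 p2 x < 0 /\ orient p2 p3 x < 0 /\
   orient p3 p4 x < 0 /\ orient p4 p1 x < 0).

Definition convex_4hole (S : seq pt) (p1 p2 p3 p4 : pt) : Prop :=
  [/\ p1 \in S, p2 \in S, p3 \in S & p4 \in S] /\
  uniq [:: p1; p2; p3; p4] /\
  convex_quad p1 p2 p3 p4 /\
  (forall x, x \in S -> ~ in_quad_interior p1 p2 p3 p4 x).

Definition balanced (red blue : seq pt) (p1 p2 p3 p4 : pt) : Prop :=
  count (mem red) [:: p1; p2; p3; p4] = 2%N /\
  count (mem blue) [:: p1; p2; p3; p4] = 2%N.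

End Geom.

(* Main.v *)
Require Import Defs.
From mathcomp Require Import all_boot all_order all_algebra.
From mathcomp Require Import ring lra.
From Stdlib Require Import Classical.
Import Order.TTheory GRing.Theory Num.Theory.
Local Open Scope ring_scope.
Set Implicit Arguments. Unset Strict Implicit.

Section Aux.
Variable R : realFieldType.
Implicit Types a b c d x : R * R.

Definition crossb a b c d : bool :=
  (orient a b c * orient a b d < 0) && (orient c d a * orient c d b < 0).
Definition Mq a b c d : R := `|orient a b c - orient a b d|.

Lemma o_id4 a b c d : orient a b c - orient a b d = orient c d b - orient c d a.
Proof. rewrite /orient; ring. Qed.
Lemma o_tri a b c x : orient a b c = orient a b x + orient b c x + orient c a x.
Proof. rewrite /orient; ring. Qed.
Lemma o_quad a c b d x : orient a c b + orient a b d =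
  orient a c x + orient c b x + orient b d x + orient d a x.
Proof. rewrite /orient; ring. Qed.
Lemma o_rot a b c : orient a b c = orient b c a.
Proof. rewrite /orient; ring. Qed.
Lemma o_sw a b c : orient a c b = - orient a b c.
Proof. rewrite /orient; ring. Qed.
Lemma o_seg a b c d s : orient c d ((1-s)*a.1 + s*b.1, (1-s)*a.2+s*b.2) =
  (1-s)*orient c d a + s* orient c d b.
Proof. rewrite /orient /=; ring. Qed.
Lemma o_segl c d s : orient c d ((1-s)*c.1 + s*d.1, (1-s)*c.2+s*d.2) = 0.
Proof. rewrite /orient /=; ring. Qed.
Lemma o_aa a c : orient a a c = 0.
Proof. rewrite /orient; ring. Qed.

Lemma negpos (u v : R) : u < 0 -> 0 < v -> u * v < 0.
Proof. move=> h1 h2; nra. Qed.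
Lemma posneg (u v : R) : 0 < u -> v < 0 -> u * v < 0.
Proof. move=> h1 h2; nra. Qed.

Lemma exists_min (T : eqType) (P : pred T) (f : T -> R) (s : seq T) q0 :
  q0 \in s -> P q0 ->
  exists q, [/\ q \in s, P q & forall q', q' \in s -> P q' -> f q <= f q'].
Proof.
elim: s q0 => [//|z s IH] q0.
case: (boolP (has P s)) => [/hasP [q1 q1s Pq1] _ _| hn].
  have [m [ms Pm hm]] := IH q1 q1s Pq1.
  case: (boolP (P z && (f z < f m))) => [/andP [Pz lt]|hz].
    exists z; split => //; first by rewrite inE eqxx.
    move=> q'; rewrite inE => /orP [/eqP -> //|q's Pq'].
    by apply: (le_trans (ltW lt)); apply: hm.
  exists m; split => //; first by rewrite inE ms orbT.
  move=> q'; rewrite inE => /orP [/eqP -> Pz|q's Pq']; last by apply: hm.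
  by move: hz; rewrite Pz /= -leNgt.
rewrite inE => /orP [/eqP -> Pz|q0s Pq0]; last first.
  by move/hasPn: hn => /(_ q0 q0s); rewrite Pq0.
exists z; split => //; first by rewrite inE eqxx.
move=> q'; rewrite inE => /orP [/eqP -> //|q's Pq'].
by move/hasPn: hn => /(_ q' q's); rewrite Pq'.
Qed.


Lemma step (red blue : seq (R * R))
    (hdisj : forall p, p \in red -> p \notin blue)
    (hgp : general_position (red ++ blue)) a b c d :
  a \in red -> b \in red -> c \in blue -> d \in blue ->
  crossb a b c d -> 0 < orient a b d ->
  (exists a' b' c' d', [/\ a' \in red, b' \in red, c' \in blue, d' \in blue &
      crossb a' b' c' d' /\ Mq a' b' c' d' < Mq a b c d]) \/
  (exists p1 p2 p3 p4 : R * R,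
    convex_4hole (red ++ blue) p1 p2 p3 p4 /\ balanced red blue p1 p2 p3 p4).
Proof.
move=> ha hb hc hd /andP [cx1 cx2] x2p.
have x1n : orient a b c < 0 by nra.
have idd := o_id4 a b c d.
have y1p : 0 < orient c d a by nra.
have y2n : orient c d b < 0 by nra.
have nred p : p \in blue -> p \notin red.
  by move=> pb; apply/negP => /hdisj; rewrite pb.
have ne p q : p \in red -> q \in blue -> p != q.
  by move=> pr qb; apply/eqP => e; move: (hdisj _ pr); rewrite e qb.
have ab : a != b by apply/eqP => e; move: x1n; rewrite e o_aa ltxx.
have cd : c != d by apply/eqP => e; move: y1p; rewrite e o_aa ltxx.
have inS p : p \in red ++ blue <-> p \in red \/ p \in blue.
  by rewrite mem_cat; split => [/orP|[]->//]; rewrite ?orbT.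
case: (classic (exists x, x \in red ++ blue /\ in_quad_interior a c b d x))
  => [[x [xS hx]]|hno]; last first.
  right; exists a, c, b, d; split; last first.
    by rewrite /balanced /= ha hb (negPf (nred _ hc)) (negPf (nred _ hd))
       hc hd (negPf (hdisj _ ha)) (negPf (hdisj _ hb)).
  split; first by split; apply/inS; auto.
  split.
    rewrite /= !inE !negb_or (ne _ _ ha hc) ab (ne _ _ ha hd) /=.
    by rewrite eq_sym (ne _ _ hb hc) cd (ne _ _ hb hd).
  split; last by move=> x xS hx; apply: hno; exists x.
  have e1 : orient a c b = - orient a b c by rewrite /orient; ring.
  have e2 : orient c b d = - orient c d b by rewrite /orient; ring.
  have e3 : orient b d a = orient a b d by rewrite /orient; ring.
  have e4 : orient d a c = orient c d a by rewrite /orient; ring.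
  left; rewrite e1 e2 e3 e4; split; [lra|split; [lra|split; lra]].
left.
have key : forall u v : R, u < 0 -> v < 0 -> v < u -> `|u| < `|v|.
  by move=> u v hu hv huv; rewrite !ltr0_norm //; lra.
have qd := o_quad a c b d x.
have e1 : orient a c b = - orient a b c by rewrite /orient; ring.
have e2 : orient c b d = - orient c d b by rewrite /orient; ring.
have e3 : orient b d a = orient a b d by rewrite /orient; ring.
have [A B C D] : [/\ 0 < orient a c x, 0 < orient c b x,
    0 < orient b d x & 0 < orient d a x].
  by case: hx => [[h1 [h2 [h3 h4]]]|[h1 [h2 [h3 h4]]]]; [split|exfalso]; lra.
have f1 : orient x b c = - orient c b x by rewrite /orient; ring.
have f2 : orient x b d = orient b d x by rewrite /orient; ring.
have f3 := o_id4 x b c d.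
have f4 := o_tri c d a x.
have f5 : orient a x c = - orient a c x by rewrite /orient; ring.
have f6 : orient a x d = orient d a x by rewrite /orient; ring.
have f7 := o_id4 a x c d.
have f8 := o_tri c d b x.
have f9 : orient d b x = - orient b d x by rewrite /orient; ring.
have f10 : orient b c x = - orient c b x by rewrite /orient; ring.
have g1 : orient c x a = orient a c x by rewrite /orient; ring.
have g2 : orient c x b = - orient c b x by rewrite /orient; ring.
have g3 := o_tri a b d x.
have g4 : orient x d a = orient d a x by rewrite /orient; ring.
have g5 : orient x d b = - orient b d x by rewrite /orient; ring.
have g6 := o_tri a b c x.
have g7 : orient c a x = - orient a c x by rewrite /orient; ring.
have neq p q : p \in red -> q \in blue -> p <> q /\ q <> p.
  by move=> pr qb; split => e; move: (ne _ _ pr qb); rewrite e eqxx.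
have cd' : c <> d by apply/eqP.
have ab' : a <> b by apply/eqP.
rewrite /Mq.
case/inS: xS => xr.
  have cdx : orient c d x != 0.
    apply: hgp; try (apply/inS; auto); first exact: cd'.
      by case: (neq _ _ xr hd).
    by case: (neq _ _ xr hc).
  case: (ltrgtP (orient c d x) 0) => [neg|pos|z]; last by rewrite z eqxx in cdx.
    exists a, x, c, d; split => //; split; last by apply: key; lra.
    apply/andP; split; [apply: negpos|apply: posneg]; lra.
  exists x, b, c, d; split => //; split; last by apply: key; lra.
  apply/andP; split; [apply: negpos|apply: posneg]; lra.
have abx : orient a b x != 0.
  apply: hgp; try (apply/inS; auto); first exact: ab'.
    by case: (neq _ _ hb xr).
  by case: (neq _ _ ha xr).
case: (ltrgtP (orient a b x) 0) => [neg|pos|z]; last by rewrite z eqxx in abx.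
  exists a, b, x, d; split => //; split; last by apply: key; lra.
  apply/andP; split; [apply: negpos|apply: posneg]; lra.
exists a, b, c, x; split => //; split; last by apply: key; lra.
apply/andP; split; [apply: negpos|apply: posneg]; lra.
Qed.

End Aux.

Lemma comb_neg (R : realFieldType) (t u v : R) : 0 <= t <= 1 -> u != 0 -> v != 0 ->
  (1 - t) * u + t * v = 0 -> u * v < 0.
Proof.
move=> /andP [t0 t1] hu hv e.
case: (ltrgtP t 0) => [tn|tp|tz]; first by exfalso; lra.
  case: (ltrgtP t 1) => [tl|tg|te]; last first.
  - by move: e; rewrite te subrr mul0r add0r mul1r => e; rewrite e eqxx in hv.
  - by exfalso; lra.
  case: (ltrgtP v 0) => [vn|vp|vz]; last by rewrite vz eqxx in hv.
    have : 0 < u by nra.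
    by move=> up; nra.
  have : u < 0 by nra.
  by move=> un; nra.
by move: e; rewrite tz subr0 mul1r mul0r addr0 => e; rewrite e eqxx in hu.
Qed.

Ltac disjt := match goal with H : _ |- _ <> _ => apply: H; assumption end.
Ltac gpt := first [ by rewrite mem_cat; apply/orP; first [left; assumption | right; assumption]
  | by apply/eqP | by disjt | assumption | idtac ].

Theorem lemma4 (R : realFieldType) (red blue : seq (R * R))
    (hdisj : forall p, p \in red -> p \notin blue)
    (hgp : general_position (red ++ blue))
    (a b c d : R * R)
    (ha : a \in red) (hb : b \in red) (hc : c \in blue) (hd : d \in blue)
    (hcross : segments_intersect a b c d) :
  exists p1 p2 p3 p4 : R * R,
    convex_4hole (red ++ blue) p1 p2 p3 p4 /\ balanced red blue p1 p2 p3 p4.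
Proof.
have ne p q : p \in red -> q \in blue -> p <> q.
  by move=> pr qb e; move: (hdisj _ pr); rewrite e qb.
have ne' p q : p \in red -> q \in blue -> q <> p.
  by move=> pr qb e; apply: (ne p q pr qb).
have inR p : p \in red -> p \in red ++ blue by move=> h; rewrite mem_cat h.
have inB p : p \in blue -> p \in red ++ blue by move=> h; rewrite mem_cat h orbT.
have hcr : crossb a b c d.
  case: hcross => X [[t [ht eX]] [s [hs eX']]].
  have e1 : orient c d X = (1 - t) * orient c d a + t * orient c d b.
    by rewrite eX o_seg.
  have e2 : orient c d X = 0 by rewrite eX' o_segl.
  have e3 : orient a b X = (1 - s) * orient a b c + s * orient a b d.
    by rewrite eX' o_seg.
  have e4 : orient a b X = 0 by rewrite eX o_segl.
  have Xa : a = b -> X = a.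
    move=> eab; rewrite eX -eab; case: (a) => a1 a2 /=; congr pair; ring.
  have Xc : c = d -> X = c.
    move=> ecd; rewrite eX' -ecd; case: (c) => a1 a2 /=; congr pair; ring.
  have ab : a <> b.
    move=> eab; have [ecd|ncd] := eqVneq c d.
      by apply: (ne a c ha hc); rewrite -(Xa eab) -(Xc ecd).
    have : orient c d a != 0.
      by apply: hgp; gpt.
    by rewrite -(Xa eab) e2 eqxx.
  have cd : c <> d.
    move=> ecd.
    have : orient a b c != 0.
      by apply: hgp; gpt.
    by rewrite -(Xc ecd) e4 eqxx.
  apply/andP; split.
    by apply: (comb_neg hs); [apply: hgp|apply: hgp|lra]; gpt.
  by apply: (comb_neg ht); [apply: hgp|apply: hgp|lra]; gpt.
pose allq := [seq (p, y) | p <- [seq (p', z) | p' <- [seq (x, y) | x <- red, y <- red], z <- blue], y <- blue].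
have inq a' b' c' d' : a' \in red -> b' \in red -> c' \in blue -> d' \in blue ->
    (a', b', c', d') \in allq.
  by move=> h1 h2 h3 h4; apply: allpairs_f => //; apply: allpairs_f => //;
    apply: allpairs_f.
pose Pb (q : (R * R) * (R * R) * (R * R) * (R * R)) :=
  [&& q.1.1.1 \in red, q.1.1.2 \in red, q.1.2 \in blue, q.2 \in blue &
      crossb q.1.1.1 q.1.1.2 q.1.2 q.2].
pose f (q : (R * R) * (R * R) * (R * R) * (R * R)) := Mq q.1.1.1 q.1.1.2 q.1.2 q.2.
have [[[[a' b'] c'] d'] [mq /and5P [h1 h2 h3 h4 hcr'] hmin]] :=
  exists_min (P:=Pb) f (inq _ _ _ _ ha hb hc hd) (ltac:(by apply/and5P)).
rewrite /= in h1 h2 h3 h4 hcr'.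
have noimp a2 b2 c2 d2 : a2 \in red -> b2 \in red -> c2 \in blue -> d2 \in blue ->
    crossb a2 b2 c2 d2 -> ~ Mq a2 b2 c2 d2 < Mq a' b' c' d'.
  move=> g1 g2 g3 g4 g5 lt.
  have := hmin (a2, b2, c2, d2) (inq _ _ _ _ g1 g2 g3 g4).
  rewrite /Pb /= g1 g2 g3 g4 g5 => /(_ isT); rewrite /f /=.
  by rewrite leNgt lt.
move: (hcr') => /andP [p1 p2].
have [neg|pos|z] := ltrgtP (orient a' b' d') 0; last first.
- by move: p1; rewrite z mulr0 ltxx.
1: { have [[a2 [b2 [c2 [d2 [g1 g2 g3 g4 [g5 g6]]]]]]|//] :=
    step hdisj hgp h1 h2 h3 h4 hcr' pos.
  by exfalso; apply: (noimp a2 b2 c2 d2). }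
have hcr2 : crossb a' b' d' c'.
  rewrite /crossb.
  have -> : orient d' c' a' = - orient c' d' a' by rewrite /orient; ring.
  have -> : orient d' c' b' = - orient c' d' b' by rewrite /orient; ring.
  by rewrite mulrNN p2 andbT mulrC.
have pos : 0 < orient a' b' c' by nra.
have [[a2 [b2 [c2 [d2 [g1 g2 g3 g4 [g5 g6]]]]]]|//] :=
  step hdisj hgp h1 h2 h4 h3 hcr2 pos.
exfalso; apply: (noimp a2 b2 c2 d2) => //.
by move: g6; rewrite /Mq (distrC (orient a' b' d')).
Qed.
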